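(* Let $G$ be an amenable Hausdorff topological group, locally compact or SIN, acting continuously by isometries on a pointed metric space $(\mathcal{M},d,0)$ with bounded orbits. Suppose there is a closed subspace $Y\subset\mathrm{Lip}_0(\mathcal{M})$ such that the map $\mathcal{F}(\mathcal{M})\to Y^*$, $\mu\mapsto(f\mapsto f(\mu))$, is a surjective linear isometry, and such that $S_gf\in Y$ for all $g\in G$ and $f\in Y$. Let $\Psi:\mathrm{Lip}_0(\mathcal{M}/G)\to\mathrm{Lip}_0^G(\mathcal{M})$, $\Psi(f)(x)=f([Gx])$, and $Z:=\Psi^{-1}(Y\cap\mathrm{Lip}_0^G(\mathcal{M}))$. If $Z$ separates the points of $\mathcal{F}(\mathcal{M}/G)$, then $\mathcal{F}(\mathcal{M}/G)$ is isometric to a $1$-complemented subspace of $\mathcal{F}(\mathcal{M})$.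
   Context: $\mathrm{Lip}_0(N)$: real Lipschitz functions on a pointed metric space $N$ vanishing at the base point, normed by the Lipschitz constant; $\delta(m)$ evaluation at $m$; $\mathcal{F}(N)=\overline{\mathrm{span}}\{\delta(m):m\in N\}\subset\mathrm{Lip}_0(N)^*$. For $g\in G$ and $f\in\mathrm{Lip}_0(\mathcal{M})$, $S_gf(m):=f(g^{-1}m)-f(g^{-1}0)$. $\mathcal{M}/G=\{[Gx]:x\in\mathcal{M}\}$ with $[Gx]=\overline{Gx}$, metric $d_{\mathcal{M}/G}([Gx],[Gy])=\inf\{d(x',y'):x'\in[Gx],y'\in[Gy]\}$ (the Hausdorff distance), base point $[G0]$. $\mathrm{Lip}_0^G(\mathcal{M})=\{f\in\mathrm{Lip}_0(\mathcal{M}):f(gx)=f(x)\ \forall g,x\}$. ''$Z$ separates the points of $\mathcal{F}(\mathcal{M}/G)$'': for every nonzero $\mu$ there is $f\in Z$ with $f(\mu)\neq 0$. Amenable: admits a left-invariant mean on bounded left-uniformly continuous functions. SIN: every neighborhood $U$ of $e$ contains a neighborhood $V$ of $e$ with $gVg^{-1}=V$ for all $g$. *)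

(* Defs.v *)
From HB Require Import structures.
From mathcomp Require Import all_boot all_order all_algebra.
From mathcomp Require Import all_classical all_reals topology normedtype.
Set Implicit Arguments. Unset Strict Implicit. Unset Printing Implicit Defensive.
Import Order.TTheory GRing.Theory Num.Theory.
Local Open Scope classical_set_scope.
Local Open Scope ring_scope.

Definition is_metric {R : realType} {X : Type} (d : X -> X -> R) : Prop :=
  (forall x y, 0 <= d x y) /\ (forall x y, d x y = 0 <-> x = y) /\
  (forall x y, d x y = d y x) /\ (forall x y z, d x z <= d x y + d y z).

Definition lipc {R : realType} {X : Type} (d : X -> X -> R) (f : X -> R) : R :=
  sup [set r | exists x y, x <> y /\ r = `|f x - f y| / d x y].

Definition lip0 {R : realType} {X : Type} (d : X -> X -> R) (x0 : X) (f : X -> R) : Prop :=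
  f x0 = 0 /\ exists L : R, forall x y, `|f x - f y| <= L * d x y.

(* elements of Lip_0(X)^* are represented by functionals (X -> R) -> R,
   of which only the values on Lip_0(X) matter *)
Definition feq {R : realType} {X : Type} (d : X -> X -> R) (x0 : X)
  (phi psi : (X -> R) -> R) : Prop := forall f, lip0 d x0 f -> phi f = psi f.

(* the finite combination sum_i a_i delta(m_i), evaluated at f *)
Definition deval {R : realType} {X : Type} (s : seq (R * X)) (f : X -> R) : R :=
  \sum_(p <- s) p.1 * f p.2.

(* F(X): the norm closure in Lip_0(X)^* of span{delta(m)} *)
Definition free_space {R : realType} {X : Type} (d : X -> X -> R) (x0 : X)
  : set ((X -> R) -> R) :=
  [set phi | forall eps : R, 0 < eps -> exists s : seq (R * X),
     forall f, lip0 d x0 f -> `|phi f - deval s f| <= eps * lipc d f].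

Definition dualnorm {R : realType} {X : Type} (d : X -> X -> R) (x0 : X)
  (phi : (X -> R) -> R) : R :=
  sup [set r | exists f, lip0 d x0 f /\ lipc d f <= 1 /\ r = `|phi f|].

Definition one_complemented_copy {R : realType} {N M : Type}
  (dN : N -> N -> R) (n0 : N) (dM : M -> M -> R) (m0 : M) : Prop :=
  exists (T : ((N -> R) -> R) -> ((M -> R) -> R))
         (P : ((M -> R) -> R) -> ((M -> R) -> R)),
    [/\ (forall mu, free_space dN n0 mu -> free_space dM m0 (T mu)),
        (forall (a : R) mu nu, free_space dN n0 mu -> free_space dN n0 nu ->
           feq dM m0 (T (fun f => a * mu f + nu f)) (fun f => a * T mu f + T nu f)),
        (forall mu, free_space dN n0 mu -> dualnorm dM m0 (T mu) = dualnorm dN n0 mu) &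
        [/\ (forall nu, free_space dM m0 nu -> free_space dM m0 (P nu)),
        (forall (a : R) mu nu, free_space dM m0 mu -> free_space dM m0 nu ->
           feq dM m0 (P (fun f => a * mu f + nu f)) (fun f => a * P mu f + P nu f)),
        (forall nu, free_space dM m0 nu -> dualnorm dM m0 (P nu) <= dualnorm dM m0 nu),
        (forall nu, free_space dM m0 nu ->
           exists mu, free_space dN n0 mu /\ feq dM m0 (P nu) (T mu)) &
        (forall mu, free_space dN n0 mu -> feq dM m0 (P (T mu)) (T mu))]].

Definition closed_lip_subspace {R : realType} {M : Type} (d : M -> M -> R) (x0 : M)
  (Y : set (M -> R)) : Prop :=
  [/\ (forall f, Y f -> lip0 d x0 f),
      Y (fun _ => 0),
      (forall (a : R) f g, Y f -> Y g -> Y (fun x => a * f x + g x)) &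
      (forall f, lip0 d x0 f ->
         (forall eps : R, 0 < eps -> exists g, Y g /\ lipc d (fun x => f x - g x) <= eps) ->
         Y f)].

Definition predual_of_free {R : realType} {M : Type} (d : M -> M -> R) (x0 : M)
  (Y : set (M -> R)) : Prop :=
  (forall mu, free_space d x0 mu ->
     sup [set r | exists f, Y f /\ lipc d f <= 1 /\ r = `|mu f|] = dualnorm d x0 mu) /\
  (forall psi : (M -> R) -> R,
     (forall (a : R) f g, Y f -> Y g -> psi (fun x => a * f x + g x) = a * psi f + psi g) ->
     (exists C : R, forall f, Y f -> `|psi f| <= C * lipc d f) ->
     exists mu, free_space d x0 mu /\ forall f, Y f -> mu f = psi f).

Definition topological_group (G : topologicalType)
  (mul : G -> G -> G) (inv : G -> G) (e : G) : Prop :=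
  [/\ (forall x y z, mul x (mul y z) = mul (mul x y) z),
      (forall x, mul e x = x), (forall x, mul x e = x),
      (forall x, mul (inv x) x = e) &
      [/\ (forall x, mul x (inv x) = e),
      continuous (fun p : G * G => mul p.1 p.2) &
      continuous inv]].

Definition loc_compact_space (G : topologicalType) : Prop :=
  forall x : G, exists K : set G, nbhs x K /\ compact K.

Definition SIN_group (G : topologicalType) (mul : G -> G -> G) (inv : G -> G) (e : G) : Prop :=
  forall U : set G, nbhs e U -> exists V : set G,
    [/\ nbhs e V, V `<=` U & forall g, [set mul (mul g v) (inv g) | v in V] = V].

Definition bounded_luc {R : realType} (G : topologicalType) (mul : G -> G -> G) (e : G)
  (f : G -> R) : Prop :=
  (exists C : R, forall x, `|f x| <= C) /\
  (forall eps : R, 0 < eps -> exists U : set G,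
     nbhs e U /\ forall u x, U u -> `|f (mul u x) - f x| <= eps).

Definition amenable (R : realType) (G : topologicalType) (mul : G -> G -> G) (e : G) : Prop :=
  exists m : (G -> R) -> R,
    [/\ (forall (a : R) f h, bounded_luc mul e f -> bounded_luc mul e h ->
           m (fun x => a * f x + h x) = a * m f + m h),
        (forall f, bounded_luc mul e f -> (forall x, 0 <= f x) -> 0 <= m f),
        m (fun _ => 1) = 1 &
        (forall g f, bounded_luc mul e f -> m (fun x => f (mul g x)) = m f)].

Definition cont_isom_action {R : realType} (G : topologicalType) (M : Type)
  (mul : G -> G -> G) (e : G) (d : M -> M -> R) (act : G -> M -> M) : Prop :=
  [/\ (forall x, act e x = x),
      (forall g h x, act (mul g h) x = act g (act h x)),
      (forall g x y, d (act g x) (act g y) = d x y) &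
      (forall g x (eps : R), 0 < eps -> exists U : set G, exists2 delta : R,
         nbhs g U /\ 0 < delta &
         forall h y, U h -> d x y < delta -> d (act g x) (act h y) < eps)].

Definition bounded_orbits {R : realType} (G : Type) (M : Type)
  (d : M -> M -> R) (act : G -> M -> M) : Prop :=
  forall x, exists C : R, forall g, d x (act g x) <= C.

Definition lip_shift {R : realType} (G M : Type) (inv : G -> G) (act : G -> M -> M)
  (x0 : M) (g : G) (f : M -> R) : M -> R :=
  fun m => f (act (inv g) m) - f (act (inv g) x0).

Definition lip0G {R : realType} (G M : Type) (d : M -> M -> R) (x0 : M)
  (act : G -> M -> M) (f : M -> R) : Prop :=
  lip0 d x0 f /\ forall g x, f (act g x) = f x.

Definition orbcl {R : realType} (G M : Type) (d : M -> M -> R) (act : G -> M -> M)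
  (x : M) : set M :=
  [set y | forall eps : R, 0 < eps -> exists g, d y (act g x) < eps].

Definition orbit_quot {R : realType} (G M : Type) (d : M -> M -> R) (act : G -> M -> M) : Type :=
  {S : set M | exists x, S = orbcl d act x}.

Definition qcl {R : realType} (G M : Type) (d : M -> M -> R) (act : G -> M -> M)
  (x : M) : orbit_quot d act :=
  exist _ (orbcl d act x) (ex_intro _ x erefl).

Definition dquot {R : realType} (G M : Type) (d : M -> M -> R) (act : G -> M -> M)
  (S T : orbit_quot d act) : R :=
  inf [set r | exists x y, proj1_sig S x /\ proj1_sig T y /\ r = d x y].

Definition Psi_quot {R : realType} (G M : Type) (d : M -> M -> R) (act : G -> M -> M)
  (f : orbit_quot d act -> R) : M -> R := fun x => f (qcl d act x).

(* Main.v *)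
Require Import Defs.
From HB Require Import structures.
From mathcomp Require Import all_boot all_order all_algebra.
From mathcomp Require Import all_classical all_reals topology normedtype.
From mathcomp Require Import ring lra.
Set Implicit Arguments. Unset Strict Implicit. Unset Printing Implicit Defensive.
Import Order.TTheory GRing.Theory Num.Theory.
Local Open Scope classical_set_scope.
Local Open Scope ring_scope.

Lemma lipc_ge0 (R : realType) (X : Type) (d : X -> X -> R) (x0 : X) (f : X -> R) :
  (forall x y, 0 <= d x y) -> lip0 d x0 f ->
  has_ubound [set r | exists x y, x <> y /\ r = `|f x - f y| / d x y] /\ 0 <= lipc d f.
Proof.
move=> hd [_ [L hL]].
have hub : has_ubound [set r | exists x y, x <> y /\ r = `|f x - f y| / d x y].
  exists `|L| => r [x [y [_ ->]]].
  have [d0|dpos] := eqVneq (d x y) 0.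
    by rewrite d0 invr0 mulr0.
  have dp : 0 < d x y by rewrite lt_neqAle eq_sym dpos hd.
  rewrite ler_pdivrMr //; apply: le_trans (hL x y) _.
  by rewrite ler_wpM2r ?hd // ler_norm.
split => //.
rewrite /lipc.
set E := [set r | _].
have [[r Er]|E0] := pselect (exists r, E r).
  apply: le_trans (ub_le_sup hub Er).
  by case: Er => x [y [_ ->]]; rewrite divr_ge0.
have -> : E = set0.
  by apply/funext => r; apply/propext; split => // Er; apply: E0; exists r.
by rewrite sup0.
Qed.

Lemma lipc_bound (R : realType) (X : Type) (d : X -> X -> R) (x0 : X) (f : X -> R) :
  (forall x y, 0 <= d x y) -> lip0 d x0 f ->
  forall x y, `|f x - f y| <= lipc d f * d x y.
Proof.
move=> hd hf x y.
have [hub c0] := lipc_ge0 hd hf.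
have [ex|nxy] := pselect (x = y).
  by rewrite ex subrr normr0 mulr_ge0.
case: hf => _ [L hL].
have [d0|dpos] := eqVneq (d x y) 0.
  by rewrite d0 mulr0; move: (hL x y); rewrite d0 mulr0.
have dp : 0 < d x y by rewrite lt_neqAle eq_sym dpos hd.
rewrite -ler_pdivrMr //.
apply: (ub_le_sup hub); by exists x, y.
Qed.

Lemma lipc_le (R : realType) (X : Type) (d : X -> X -> R) (g : X -> R) (L : R) :
  (forall x y, 0 <= d x y) -> 0 <= L ->
  (forall x y, `|g x - g y| <= L * d x y) -> lipc d g <= L.
Proof.
move=> hd L0 hg; rewrite /lipc.
set E := [set r | _].
have [[r Er]|E0] := pselect (exists r, E r).
  apply: ge_sup; first by exists r.
  move=> s [x [y [_ ->]]].
  have [d0|dpos] := eqVneq (d x y) 0.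
    by rewrite d0 invr0 mulr0.
  have dp : 0 < d x y by rewrite lt_neqAle eq_sym dpos hd.
  by rewrite ler_pdivrMr.
have -> : E = set0.
  by apply/funext => r; apply/propext; split => // Er; apply: E0; exists r.
by rewrite sup0.
Qed.

Lemma zero_lemma (R : realType) (X K : R) :
  0 <= K -> (forall eps : R, 0 < eps -> `|X| <= eps * K) -> X = 0.
Proof.
move=> K0 h; apply/eqP; apply/negPn/negP => X0.
have nX : 0 < `|X| by rewrite normr_gt0.
have e0 : 0 < `|X| / (K + 1) by rewrite divr_gt0 // ltr_wpDl.
have := h _ e0.
rewrite mulrAC ler_pdivlMr ?ltr_wpDl // => H.
have : `|X| * (K + 1) - `|X| * K <= 0 by rewrite subr_le0.
by rewrite -mulrBr addrAC subrr add0r mulr1 leNgt nX.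
Qed.

Lemma lip0_comb (R : realType) (X : Type) (d : X -> X -> R) (x0 : X) (a : R) f g :
  (forall x y, 0 <= d x y) -> lip0 d x0 f -> lip0 d x0 g ->
  lip0 d x0 (fun x => a * f x + g x) /\
  lipc d (fun x => a * f x + g x) <= `|a| * lipc d f + lipc d g.
Proof.
move=> hd hf hg.
have hb : forall x y, `|a * f x + g x - (a * f y + g y)| <= (`|a| * lipc d f + lipc d g) * d x y.
  move=> x y.
  have -> : a * f x + g x - (a * f y + g y) = a * (f x - f y) + (g x - g y) by ring.
  apply: le_trans (ler_normD _ _) _.
  rewrite normrM mulrDl -mulrA; apply: lerD; first apply: ler_wpM2l => //.
    exact: (lipc_bound hd hf).
  exact: (lipc_bound hd hg).
have c0 : 0 <= `|a| * lipc d f + lipc d g.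
  by rewrite addr_ge0 ?mulr_ge0 //; [case: (lipc_ge0 hd hf)|case: (lipc_ge0 hd hg)].
split; last exact: lipc_le.
split; last by exists (`|a| * lipc d f + lipc d g).
by case: hf => -> _; case: hg => -> _; rewrite mulr0 addr0.
Qed.

Lemma lip0_zero (R : realType) (X : Type) (d : X -> X -> R) (x0 : X) :
  (forall x y, 0 <= d x y) -> lip0 d x0 (fun _ => 0) /\ lipc d (fun _ : X => 0 : R) <= 1.
Proof.
move=> hd; split; first by split => //; exists 0 => x y; rewrite subrr normr0 mul0r.
by apply: lipc_le => // x y; rewrite subrr normr0 mul1r.
Qed.

Lemma deval_bound (R : realType) (X : Type) (d : X -> X -> R) (x0 : X) s f :
  (forall x y, 0 <= d x y) -> lip0 d x0 f ->
  `|deval s f| <= lipc d f * \sum_(p <- s) `|p.1| * d p.2 x0.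
Proof.
move=> hd hf; rewrite /deval mulr_sumr.
apply: le_trans (ler_norm_sum _ _ _) _.
apply: ler_sum => p _.
rewrite normrM mulrCA ler_wpM2l //.
have := lipc_bound hd hf p.2 x0.
by case: hf => -> _; rewrite subr0.
Qed.

Lemma free_bound (R : realType) (X : Type) (d : X -> X -> R) (x0 : X) mu :
  (forall x y, 0 <= d x y) -> free_space d x0 mu ->
  exists K, 0 <= K /\ forall f, lip0 d x0 f -> `|mu f| <= K * lipc d f.
Proof.
move=> hd hmu; have [s hs] := hmu 1 ltr01.
exists (\sum_(p <- s) `|p.1| * d p.2 x0 + 1); split.
  by rewrite addr_ge0 // sumr_ge0 // => p _; rewrite mulr_ge0.
move=> f hf.
have -> : mu f = deval s f + (mu f - deval s f) by ring.
apply: le_trans (ler_normD _ _) _.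
rewrite mulrDl [_ * lipc d f]mulrC; apply: lerD; [exact: (deval_bound s hd hf) | exact: hs].
Qed.

Lemma free_lin (R : realType) (X : Type) (d : X -> X -> R) (x0 : X) mu (a : R) f g :
  (forall x y, 0 <= d x y) -> free_space d x0 mu -> lip0 d x0 f -> lip0 d x0 g ->
  mu (fun x => a * f x + g x) = a * mu f + mu g.
Proof.
move=> hd hmu hf hg.
have [hc _] := lip0_comb a hd hf hg.
apply/eqP; rewrite -subr_eq0; apply/eqP.
apply: (@zero_lemma _ _ (lipc d (fun x => a * f x + g x) + `|a| * lipc d f + lipc d g)).
  rewrite !addr_ge0 ?mulr_ge0 //; [case: (lipc_ge0 hd hc)|case: (lipc_ge0 hd hf)|case: (lipc_ge0 hd hg)] => //.
move=> eps e0; have [s hs] := hmu eps e0.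
have hdev : deval s (fun x => a * f x + g x) = a * deval s f + deval s g.
  rewrite /deval mulr_sumr -big_split /=; apply: eq_bigr => p _; ring.
have -> : mu (fun x => a * f x + g x) - (a * mu f + mu g) =
  (mu (fun x => a * f x + g x) - deval s (fun x => a * f x + g x))
  - a * (mu f - deval s f) - (mu g - deval s g) by rewrite hdev; ring.
apply: le_trans (ler_normB _ _) _.
apply: le_trans (lerD (ler_normB _ _) (lexx _)) _.
rewrite normrM [in X in _ <= X]mulrDr [in X in _ <= X]mulrDr.
apply: lerD; last exact: hs.
apply: lerD; first exact: hs.
by rewrite mulrCA ler_wpM2l // hs.
Qed.

Lemma free_comb (R : realType) (X : Type) (d : X -> X -> R) (x0 : X) mu nu (a : R) :
  (forall x y, 0 <= d x y) -> free_space d x0 mu -> free_space d x0 nu ->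
  free_space d x0 (fun f => a * mu f + nu f).
Proof.
move=> hd hmu hnu eps e0.
have e1 : 0 < eps / (2 * (`|a| + 1)) by rewrite divr_gt0 // mulr_gt0 // ltr_wpDl.
have e2 : 0 < eps / 2 by rewrite divr_gt0.
have [s1 h1] := hmu _ e1; have [s2 h2] := hnu _ e2.
exists ([seq (a * p.1, p.2) | p <- s1] ++ s2) => f hf.
have hdev : deval ([seq (a * p.1, p.2) | p <- s1] ++ s2) f = a * deval s1 f + deval s2 f.
  rewrite /deval big_cat big_map /= mulr_sumr; congr (_ + _); apply: eq_bigr => p _; ring.
rewrite hdev.
have -> : a * mu f + nu f - (a * deval s1 f + deval s2 f) =
   a * (mu f - deval s1 f) + (nu f - deval s2 f) by ring.
have c0 : 0 <= lipc d f by case: (lipc_ge0 hd hf).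
apply: le_trans (ler_normD _ _) _; rewrite normrM.
apply: le_trans (lerD (ler_wpM2l (normr_ge0 a) (h1 f hf)) (h2 f hf)) _.
rewrite mulrA -mulrDl ler_wpM2r //.
have ha : `|a| * (eps / (2 * (`|a| + 1))) <= eps / 2.
  rewrite mulrA ler_pdivrMr ?mulr_gt0 ?ltr_wpDl //.
  rewrite mulrA -[eps / 2 * 2]mulrA mulVf ?pnatr_eq0 // mulr1 mulrC.
  apply: ler_wpM2l; [exact: ltW | lra].
apply: le_trans (lerD ha (lexx _)) _.
by rewrite -splitr.
Qed.

Lemma dual_bound (R : realType) (X : Type) (d : X -> X -> R) (x0 : X) mu f :
  (forall x y, 0 <= d x y) -> free_space d x0 mu -> lip0 d x0 f -> lipc d f <= 1 ->
  `|mu f| <= dualnorm d x0 mu.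
Proof.
move=> hd hmu hf hl; have [K [K0 hK]] := free_bound hd hmu.
apply: (ub_le_sup); last by exists f.
exists K => r [g [hg [hgl ->]]].
apply: le_trans (hK g hg) _; by rewrite ler_piMr.
Qed.

Lemma dual_feq (R : realType) (X : Type) (d : X -> X -> R) (x0 : X) mu nu :
  feq d x0 mu nu -> dualnorm d x0 mu = dualnorm d x0 nu.
Proof.
move=> h; rewrite /dualnorm; congr sup; apply/funext => r; apply/propext.
by split => -[f [hf [hl ->]]]; exists f; rewrite (h f hf).
Qed.

Lemma dual_zero_feq (R : realType) (X : Type) (d : X -> X -> R) (x0 : X) xi :
  (forall x y, 0 <= d x y) -> free_space d x0 xi -> dualnorm d x0 xi <= 0 ->
  feq d x0 xi (fun _ => 0).
Proof.
move=> hd hxi hn f hf.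
have [hz _] := lip0_zero x0 hd.
have c0 : 0 < lipc d f + 1 by rewrite ltr_wpDl //; case: (lipc_ge0 hd hf).
have x00 : xi (fun _ => 0) = 0.
  have := free_lin 1 hd hxi hz hz.
  have -> : (fun x : X => 1 * 0 + 0) = (fun _ => 0 : R) by apply/funext => x; rewrite mul1r addr0.
  by move=> h; lra.
have := free_lin (lipc d f + 1)^-1 hd hxi hf hz.
rewrite x00 addr0 => hlin.
have [hg _] := lip0_comb (lipc d f + 1)^-1 hd hf hz.
have hgl : lipc d (fun x => (lipc d f + 1)^-1 * f x + 0) <= 1.
  apply: lipc_le => // x y.
  have -> : (lipc d f + 1)^-1 * f x + 0 - ((lipc d f + 1)^-1 * f y + 0) =
     (lipc d f + 1)^-1 * (f x - f y) by ring.
  rewrite normrM ger0_norm; last by rewrite invr_ge0 ltW.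
  rewrite mul1r mulrC ler_pdivrMr //.
  apply: le_trans (lipc_bound hd hf x y) _.
  rewrite mulrC ler_wpM2l //; lra.
have := dual_bound hd hxi hg hgl.
rewrite hlin => h.
have : `|(lipc d f + 1)^-1 * xi f| <= 0 by apply: le_trans h hn.
rewrite normr_le0 mulf_eq0 invr_eq0 => /orP[/eqP c|/eqP //].
by move: c0; rewrite c ltxx.
Qed.

Lemma agreeY (R : realType) (X : Type) (d : X -> X -> R) (x0 : X) Y mu nu :
  (forall x y, 0 <= d x y) -> closed_lip_subspace d x0 Y -> predual_of_free d x0 Y ->
  free_space d x0 mu -> free_space d x0 nu -> (forall f, Y f -> mu f = nu f) ->
  feq d x0 mu nu.
Proof.
move=> hd [hYl hY0 _ _] [hpn _] hmu hnu hag.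
have hxi := free_comb (-1) hd hnu hmu.
have : feq d x0 (fun f => -1 * nu f + mu f) (fun _ => 0).
  apply: dual_zero_feq => //.
  rewrite -(hpn _ hxi); apply: ge_sup.
    exists `|-1 * nu (fun _ => 0) + mu (fun _ => 0)|; exists (fun _ => 0); split => //.
    by split => //; case: (lip0_zero x0 hd).
  by move=> r [f [hf [_ ->]]]; rewrite hag // mulN1r addNr normr0.
move=> h f hf; have := h f hf => /= H; lra.
Qed.

Lemma grp_left_inv (G : topologicalType) mul inv (e : G) :
  topological_group mul inv e -> forall y c, mul y c = e -> y = inv c.
Proof.
move=> [hA h1 h2 h3 [h4 _ _]] y c hyc.
by rewrite -(h2 y) -(h4 c) hA hyc h1.
Qed.

Lemma grp_inv_mul (G : topologicalType) mul inv (e : G) :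
  topological_group mul inv e -> forall a b, inv (mul a b) = mul (inv b) (inv a).
Proof.
move=> hg a b; symmetry; apply: (grp_left_inv hg).
case: hg => [hA h1 h2 h3 [h4 _ _]].
by rewrite -hA [mul (inv a) _]hA h3 h1 h3.
Qed.

Lemma grp_inv_e (G : topologicalType) mul inv (e : G) :
  topological_group mul inv e -> inv e = e.
Proof.
move=> hg; symmetry; apply: (grp_left_inv hg); by case: hg => [_ h1 _ _ _]; rewrite h1.
Qed.

Lemma grp_inv_inv (G : topologicalType) mul inv (e : G) :
  topological_group mul inv e -> forall h, inv (inv h) = h.
Proof.
move=> hg h; symmetry; apply: (grp_left_inv hg); by case: hg => [_ _ _ _ [h4 _ _]].
Qed.

Lemma luc_const (R : realType) (G : topologicalType) mul (e : G) (c : R) :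
  bounded_luc mul e (fun _ => c).
Proof.
split; first by exists `|c|.
move=> eps e0; exists setT; split; first exact: filterT.
by move=> u x _; rewrite subrr normr0 ltW.
Qed.

Lemma luc_comb (R : realType) (G : topologicalType) mul (e : G) (a : R) f h :
  bounded_luc mul e f -> bounded_luc mul e h ->
  bounded_luc mul e (fun x => a * f x + h x).
Proof.
move=> [[C1 hC1] hf] [[C2 hC2] hh]; split.
  exists (`|a| * C1 + C2) => x; apply: le_trans (ler_normD _ _) _.
  by rewrite normrM lerD // ler_wpM2l.
move=> eps e0.
have e1 : 0 < eps / 2 / (`|a| + 1) by rewrite !divr_gt0 // ltr_wpDl.
have e2 : 0 < eps / 2 by rewrite divr_gt0.
have [U1 [hU1 hu1]] := hf _ e1; have [U2 [hU2 hu2]] := hh _ e2.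
exists (U1 `&` U2); split; first exact: filterI.
move=> u x [u1 u2].
have -> : a * f (mul u x) + h (mul u x) - (a * f x + h x) =
  a * (f (mul u x) - f x) + (h (mul u x) - h x) by ring.
apply: le_trans (ler_normD _ _) _; rewrite normrM.
apply: le_trans (lerD (ler_wpM2l (normr_ge0 a) (hu1 u x u1)) (hu2 u x u2)) _.
have : `|a| * (eps / 2 / (`|a| + 1)) <= eps / 2.
  rewrite mulrA ler_pdivrMr ?ltr_wpDl //; nra.
lra.
Qed.

Lemma mean_props (R : realType) (G : topologicalType) mul (e : G) (m : (G -> R) -> R) :
  (forall (a : R) f h, bounded_luc mul e f -> bounded_luc mul e h ->
           m (fun x => a * f x + h x) = a * m f + m h) ->
  (forall f, bounded_luc mul e f -> (forall x, 0 <= f x) -> 0 <= m f) ->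
  m (fun _ => 1) = 1 ->
  (forall c : R, m (fun _ => c) = c) /\
  (forall D (c : R), bounded_luc mul e D -> (forall x, `|D x| <= c) -> `|m D| <= c).
Proof.
move=> hlin hpos h1.
have m0 : m (fun _ => 0) = 0.
  have := hlin 1 _ _ (luc_const mul e 0) (luc_const mul e 0).
  have -> : (fun x : G => 1 * 0 + 0) = (fun _ => 0 : R) by apply/funext => x; rewrite mul1r addr0.
  move=> h; lra.
have mc : forall c : R, m (fun _ => c) = c.
  move=> c; have := hlin c _ _ (luc_const mul e 1) (luc_const mul e 0).
  have -> : (fun x : G => c * 1 + 0) = (fun _ => c) by apply/funext => x; rewrite mulr1 addr0.
  by rewrite h1 m0 mulr1 addr0.
split => // D c hD hc.
have q1 : 0 <= -1 * m D + c.
  rewrite -[X in _ + X](mc c) -hlin; [|exact: hD|exact: luc_const].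
  apply: hpos; first exact: (luc_comb (-1) hD (luc_const mul e c)).
  move=> x /=; have := hc x; rewrite ler_norml => /andP[? ?]; lra.
have q2 : 0 <= 1 * m D + c.
  rewrite -[X in _ + X](mc c) -hlin; [|exact: hD|exact: luc_const].
  apply: hpos; first exact: (luc_comb 1 hD (luc_const mul e c)).
  move=> x /=; have := hc x; rewrite ler_norml => /andP[? ?]; lra.
rewrite ler_norml; apply/andP; split; lra.
Qed.

Definition phi (R : realType) (G M : Type) (inv : G -> G) (act : G -> M -> M)
  (f : M -> R) (y : M) : G -> R := fun g => f (act (inv g) y).

Definition Aavg (R : realType) (G M : Type) (inv : G -> G) (act : G -> M -> M)
  (m : (G -> R) -> R) (x0 : M) (f : M -> R) (y : M) : R :=
  m (phi inv act f y) - m (phi inv act f x0).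

Section Avg.
#[local] Set Default Proof Using "All".
Context (R : realType) (G : topologicalType) (mul : G -> G -> G) (inv : G -> G) (e : G)
  (M : Type) (d : M -> M -> R) (x0 : M) (act : G -> M -> M) (m : (G -> R) -> R).
Context (hg : topological_group mul inv e) (hmet : is_metric d)
  (hact : cont_isom_action mul e d act) (hbo : bounded_orbits d act).
Context (hlin : forall (a : R) f h, bounded_luc mul e f -> bounded_luc mul e h ->
           m (fun x => a * f x + h x) = a * m f + m h)
  (hpos : forall f, bounded_luc mul e f -> (forall x, 0 <= f x) -> 0 <= m f)
  (h1 : m (fun _ => 1) = 1)
  (hinvar : forall g f, bounded_luc mul e f -> m (fun x => f (mul g x)) = m f).

Let hd : forall x y, 0 <= d x y. Proof. by case: hmet. Qed.
Let hdd : forall x, d x x = 0. Proof. by case: hmet => _ [h _] x; apply/h. Qed.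
Let hsym : forall x y, d x y = d y x. Proof. by case: hmet => _ [_ [h _]]. Qed.
Let htri : forall x y z, d x z <= d x y + d y z. Proof. by case: hmet => _ [_ [_ h]]. Qed.

Lemma phi_luc f y : lip0 d x0 f -> bounded_luc mul e (phi inv act f y).
Proof.
move=> hf; have [_ L0] := lipc_ge0 hd hf; have hb := lipc_bound hd hf.
case: hact => [ha1 hamul hiso hcont].
split.
  have [C hC] := hbo y.
  exists (lipc d f * (C + d y x0)) => g; rewrite /phi.
  have -> : f (act (inv g) y) = f (act (inv g) y) - f x0 by case: hf => -> _; rewrite subr0.
  apply: le_trans (hb _ _) _; rewrite ler_wpM2l //.
  apply: le_trans (htri _ y _) _; rewrite lerD // hsym; exact: hC.
move=> eps e0.
have e1 : 0 < eps / (lipc d f + 1) by rewrite divr_gt0 // ltr_wpDl.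
have [U [delta [hU hdel] hc]] := hcont e y _ e1.
have hV : nbhs e (inv @^-1` U).
  case: hg => _ _ _ _ [_ _ hci].
  have := hci e; rewrite /continuous_at (grp_inv_e hg) => h; exact: h _ hU.
exists (inv @^-1` U); split => // u x hu; rewrite /phi.
rewrite (grp_inv_mul hg) hamul.
apply: le_trans (hb _ _) _; rewrite hiso hsym.
have := hc (inv u) y hu; rewrite hdd ha1 => /(_ hdel) hlt.
apply: le_trans (ler_wpM2l L0 (ltW hlt)) _.
rewrite mulrA ler_pdivrMr ?ltr_wpDl //; nra.
Qed.

Let mp := mean_props hlin hpos h1.

Lemma A_x0 f : Aavg inv act m x0 f x0 = 0.
Proof. by rewrite /Aavg subrr. Qed.

Lemma A_lip f y z : lip0 d x0 f ->
  `|Aavg inv act m x0 f y - Aavg inv act m x0 f z| <= lipc d f * d y z.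
Proof.
move=> hf; rewrite /Aavg.
have -> : m (phi inv act f y) - m (phi inv act f x0) - (m (phi inv act f z) - m (phi inv act f x0))
   = -1 * m (phi inv act f z) + m (phi inv act f y) by ring.
rewrite -hlin; try exact: phi_luc.
case: mp => _ hle; apply: hle; first by apply: luc_comb; exact: phi_luc.
move=> g /=; rewrite /phi.
have -> : -1 * f (act (inv g) z) + f (act (inv g) y) = f (act (inv g) y) - f (act (inv g) z) by ring.
apply: le_trans (lipc_bound hd hf _ _) _.
by case: hact => _ _ -> _.
Qed.

Lemma A_inv f h y : lip0 d x0 f ->
  Aavg inv act m x0 f (act h y) = Aavg inv act m x0 f y.
Proof.
move=> hf; rewrite /Aavg; congr (_ - _).
have -> : phi inv act f (act h y) = (fun x => phi inv act f y (mul (inv h) x)).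
  apply/funext => x; rewrite /phi (grp_inv_mul hg) (grp_inv_inv hg).
  by case: hact => _ -> _ _.
by rewrite hinvar //; exact: phi_luc.
Qed.

Lemma A_lin (a : R) f h y : lip0 d x0 f -> lip0 d x0 h ->
  Aavg inv act m x0 (fun x => a * f x + h x) y =
  a * Aavg inv act m x0 f y + Aavg inv act m x0 h y.
Proof.
move=> hf hh; rewrite /Aavg.
have E : forall z, m (phi inv act (fun x => a * f x + h x) z) =
   a * m (phi inv act f z) + m (phi inv act h z).
  by move=> z; rewrite -hlin //; exact: phi_luc.
rewrite !E; ring.
Qed.

Lemma A_fix f y : f x0 = 0 -> (forall g x, f (act g x) = f x) ->
  Aavg inv act m x0 f y = f y.
Proof.
move=> f0 hfix; rewrite /Aavg /phi.
have E : forall z, (fun g => f (act (inv g) z)) = (fun _ => f z).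
  by move=> z; apply/funext => g; rewrite hfix.
by rewrite !E; case: mp => mc _; rewrite !mc f0 subr0.
Qed.

Lemma A_cl f y z : lip0 d x0 f -> orbcl d act y z ->
  Aavg inv act m x0 f z = Aavg inv act m x0 f y.
Proof.
move=> hf hz; apply/eqP; rewrite -subr_eq0; apply/eqP.
have [_ L0] := lipc_ge0 hd hf.
apply: (zero_lemma L0) => eps e0.
have [g hg'] := hz eps e0.
rewrite -(A_inv g y hf).
apply: le_trans (A_lip _ _ hf) _.
by rewrite mulrC ler_wpM2r // ltW.
Qed.

End Avg.

Definition rep (R : realType) (G M : Type) (d : M -> M -> R) (act : G -> M -> M)
  (S : orbit_quot d act) : M := projT1 (cid (proj2_sig S)).

Definition Bq (R : realType) (G M : Type) (d : M -> M -> R) (inv : G -> G) (act : G -> M -> M)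
  (m : (G -> R) -> R) (x0 : M) (f : M -> R) (S : orbit_quot d act) : R :=
  Aavg inv act m x0 f (rep S).

Section Quot.
#[local] Set Default Proof Using "All".
Context (R : realType) (G : topologicalType) (mul : G -> G -> G) (inv : G -> G) (e : G)
  (M : Type) (d : M -> M -> R) (x0 : M) (act : G -> M -> M) (m : (G -> R) -> R).
Context (hg : topological_group mul inv e) (hmet : is_metric d)
  (hact : cont_isom_action mul e d act) (hbo : bounded_orbits d act).
Context (hlin : forall (a : R) f h, bounded_luc mul e f -> bounded_luc mul e h ->
           m (fun x => a * f x + h x) = a * m f + m h)
  (hpos : forall f, bounded_luc mul e f -> (forall x, 0 <= f x) -> 0 <= m f)
  (h1 : m (fun _ => 1) = 1)
  (hinvar : forall g f, bounded_luc mul e f -> m (fun x => f (mul g x)) = m f).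

Let hd : forall x y, 0 <= d x y. Proof. by case: hmet. Qed.
Let hdd : forall x, d x x = 0. Proof. by case: hmet => _ [h _] x; apply/h. Qed.

Local Notation N := (@orbit_quot R G M d act).
Local Notation dN := (@dquot R G M d act).
Local Notation n0 := (@qcl R G M d act x0).

Lemma rep_spec (S : N) : proj1_sig S = orbcl d act (rep S).
Proof. by rewrite /rep; case: (cid _) => /= x ->. Qed.

Lemma orbcl_refl x : orbcl d act x x.
Proof. move=> eps e0; exists e; by case: hact => -> _ _ _; rewrite hdd. Qed.

Lemma rep_in (S : N) : proj1_sig S (rep S).
Proof. rewrite rep_spec; exact: orbcl_refl. Qed.

Lemma qcl_rep (S : N) : qcl d act (rep S) = S.
Proof.
have := rep_spec S; move: (rep S) => x.
case: S => S0 pf /= E; subst S0; rewrite /qcl; congr exist; exact: Prop_irrelevance.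
Qed.

Lemma dquot_ge0 (S T : N) : 0 <= dN S T.
Proof.
apply: lb_le_inf; first by exists (d (rep S) (rep T)), (rep S), (rep T); split; [exact: rep_in|split; [exact: rep_in|]].
by move=> r [x [y [_ [_ ->]]]].
Qed.

Lemma dquot_le x y : dN (qcl d act x) (qcl d act y) <= d x y.
Proof.
apply: ge_inf; first by exists 0 => r [a [b [_ [_ ->]]]].
by exists x, y; split; [exact: orbcl_refl|split; [exact: orbcl_refl|]].
Qed.

Lemma Bq_val f (S : N) s : lip0 d x0 f -> proj1_sig S s -> Bq inv m x0 f S = Aavg inv act m x0 f s.
Proof.
move=> hf hs; rewrite /Bq; symmetry.
apply: (A_cl hg hmet hact hbo hlin hpos h1 hinvar) => //.
by rewrite -rep_spec.
Qed.

Lemma Bq_lip0 f : lip0 d x0 f -> lip0 dN n0 (Bq inv m x0 f) /\ lipc dN (Bq inv m x0 f) <= lipc d f.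
Proof.
move=> hf; have [_ c0] := lipc_ge0 hd hf.
have hb : forall S T : N, `|Bq inv m x0 f S - Bq inv m x0 f T| <= lipc d f * dN S T.
  move=> S T.
  have [c00|cpos] := eqVneq (lipc d f) 0.
    rewrite c00 mul0r /Bq.
    by have := A_lip hg hmet hact hbo hlin hpos h1 hinvar (rep S) (rep T) hf; rewrite c00 mul0r.
  have cp : 0 < lipc d f by rewrite lt_neqAle eq_sym cpos.
  rewrite mulrC -ler_pdivrMr //.
  apply: lb_le_inf; first by exists (d (rep S) (rep T)), (rep S), (rep T); split; [exact: rep_in|split; [exact: rep_in|]].
  move=> r [x [y [hx [hy ->]]]].
  rewrite ler_pdivrMr // mulrC (Bq_val hf hx) (Bq_val hf hy).
  exact: (A_lip hg hmet hact hbo hlin hpos h1 hinvar).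
split; last by apply: lipc_le => //; exact: dquot_ge0.
split; last by exists (lipc d f).
rewrite (@Bq_val f n0 x0 hf); [by rewrite /Aavg subrr | exact: orbcl_refl].
Qed.

Lemma Bq_lin (a : R) f h : lip0 d x0 f -> lip0 d x0 h ->
  Bq inv m x0 (fun x => a * f x + h x) = (fun S : N => a * Bq inv m x0 f S + Bq inv m x0 h S).
Proof.
move=> hf hh; apply/funext => S; rewrite /Bq.
exact: (A_lin hg hmet hact hbo hlin hpos h1 hinvar).
Qed.

Lemma Bq_Psi (h : N -> R) : h n0 = 0 -> (forall g x, Psi_quot h (act g x) = Psi_quot h x) ->
  Bq inv m x0 (Psi_quot h) = h.
Proof.
move=> h0 hfix; apply/funext => S; rewrite /Bq.
have -> : Aavg inv act m x0 (Psi_quot h) (rep S) = Psi_quot h (rep S).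
  by apply: (A_fix hg hmet hact hbo hlin hpos h1 hinvar).
by rewrite /Psi_quot qcl_rep.
Qed.

Lemma Psi_lip0 (h : N -> R) : lip0 dN n0 h ->
  lip0 d x0 (Psi_quot h) /\ lipc d (Psi_quot h) <= lipc dN h.
Proof.
move=> hh; have [_ c0] := lipc_ge0 dquot_ge0 hh.
have hb : forall x y, `|Psi_quot h x - Psi_quot h y| <= lipc dN h * d x y.
  move=> x y; rewrite /Psi_quot.
  apply: le_trans (lipc_bound dquot_ge0 hh _ _) _.
  by rewrite ler_wpM2l // dquot_le.
split; last exact: lipc_le.
split; last by exists (lipc dN h).
by case: hh.
Qed.

End Quot.

Theorem corollary4p8 (R : realType) (G : topologicalType)
  (mul : G -> G -> G) (inv : G -> G) (e : G)
  (M : Type) (d : M -> M -> R) (x0 : M) (act : G -> M -> M)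
  (Y : set (M -> R)) :
  topological_group mul inv e ->
  hausdorff_space G ->
  amenable R mul e ->
  (loc_compact_space G \/ SIN_group mul inv e) ->
  is_metric d ->
  cont_isom_action mul e d act ->
  bounded_orbits d act ->
  closed_lip_subspace d x0 Y ->
  predual_of_free d x0 Y ->
  (forall g f, Y f -> Y (lip_shift inv act x0 g f)) ->
  (let Z := [set f : orbit_quot d act -> R |
              lip0 (dquot (act:=act)) (qcl d act x0) f /\
              Y (Psi_quot f) /\ lip0G d x0 act (Psi_quot f)] in
   forall mu, free_space (dquot (act:=act)) (qcl d act x0) mu ->
     ~ feq (dquot (act:=act)) (qcl d act x0) mu (fun _ => 0) ->
     exists f, Z f /\ mu f <> 0) ->
  one_complemented_copy (dquot (act:=act)) (qcl d act x0) d x0.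
Proof.
move=> hg _ [m [hlin hpos h1 hinvar]] _ hmet hact hbo hY hpred _ hsep.
cbv zeta in hsep.
have hd : forall x y, 0 <= d x y by case: hmet.
have hdN := dquot_ge0 x0 hg hmet hact hbo hlin hpos h1 hinvar.
have BL := Bq_lip0 (x0:=x0) hg hmet hact hbo hlin hpos h1 hinvar.
have Blin := Bq_lin (x0:=x0) hg hmet hact hbo hlin hpos h1 hinvar.
have BPsi := Bq_Psi (x0:=x0) hg hmet hact hbo hlin hpos h1 hinvar.
have PL := Psi_lip0 (x0:=x0) hg hmet hact hbo hlin hpos h1 hinvar.
have hYl : forall f, Y f -> lip0 d x0 f by case: hY.
have hY0 : Y (fun _ => 0) by case: hY.
have hYc : forall (a : R) f g, Y f -> Y g -> Y (fun x => a * f x + g x) by case: hY.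
pose B := Bq inv m x0 (act := act) (d := d).
pose psi := fun (mu : (orbit_quot d act -> R) -> R) (f : M -> R) =>
  if pselect (Y f) then mu (B f) else 0.
pose Tf := fun ps : (M -> R) -> R =>
  match pselect (exists nu, free_space d x0 nu /\ forall f, Y f -> nu f = ps f) with
  | left H => projT1 (cid H) | right _ => fun _ => 0 end.
pose T := fun mu => Tf (psi mu).
have psiY : forall mu f, Y f -> psi mu f = mu (B f).
  by move=> mu f hf; rewrite /psi; case: (pselect (Y f)).
have hT : forall mu, free_space (dquot (act:=act)) (qcl d act x0) mu ->
    free_space d x0 (T mu) /\ forall f, Y f -> T mu f = mu (B f).
  move=> mu hmu.
  have ex : exists nu, free_space d x0 nu /\ forall f, Y f -> nu f = psi mu f.
    apply: hpred.2.
      move=> a f g hf hg'; have hc : Y (fun x => a * f x + g x) by exact: hYc.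
      rewrite !psiY // /B (Blin a f g (hYl f hf) (hYl g hg')).
      apply: (free_lin a hdN hmu); [by case: (BL f (hYl f hf))|by case: (BL g (hYl g hg'))].
    have [K [K0 hK]] := free_bound hdN hmu.
    exists K => f hf; rewrite psiY //.
    have [hb hbl] := BL f (hYl f hf).
    apply: le_trans (hK _ hb) _; exact: ler_wpM2l.
  rewrite /T /Tf; case: pselect => [H|//].
  case: (cid H) => nu [hnu hnu2] /=; split => // f hf.
  by rewrite hnu2 //; exact: psiY.
have Tfeq : forall mu1 mu2, feq (dquot (act:=act)) (qcl d act x0) mu1 mu2 -> T mu1 = T mu2.
  move=> mu1 mu2 h; rewrite /T; congr Tf; apply/funext => f; rewrite /psi.
  case: pselect => // hf; apply: h; by case: (BL f (hYl f hf)).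
pose Q := fun (nu : (M -> R) -> R) (h : orbit_quot d act -> R) => nu (Psi_quot h).
have hQ : forall nu, free_space d x0 nu -> free_space (dquot (act:=act)) (qcl d act x0) (Q nu).
  move=> nu hnu eps e0; have [s hs] := hnu eps e0.
  exists [seq (p.1, qcl d act p.2) | p <- s] => h hh.
  have [hp hpl] := PL h hh.
  have -> : deval [seq (p.1, qcl d act p.2) | p <- s] h = deval s (Psi_quot h).
    by rewrite /deval big_map.
  apply: le_trans (hs _ hp) _; apply: ler_wpM2l => //; exact: ltW.
have hQn : forall nu, free_space d x0 nu ->
    dualnorm (dquot (act:=act)) (qcl d act x0) (Q nu) <= dualnorm d x0 nu.
  move=> nu hnu; apply: ge_sup.
    exists `|Q nu (fun _ => 0)|, (fun _ => 0); split; first by case: (lip0_zero (qcl d act x0) hdN).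
    by split => //; case: (lip0_zero (qcl d act x0) hdN).
  move=> r [h [hh [hl ->]]]; have [hp hpl] := PL h hh.
  rewrite /Q; apply: (dual_bound hd hnu hp); exact: le_trans hpl hl.
have hQT : forall mu, free_space (dquot (act:=act)) (qcl d act x0) mu ->
    feq (dquot (act:=act)) (qcl d act x0) (Q (T mu)) mu.
  move=> mu hmu; have [hTf hT2] := hT mu hmu.
  have hxi := free_comb (-1) hdN hmu (hQ _ hTf).
  have : feq (dquot (act:=act)) (qcl d act x0) (fun h => -1 * mu h + Q (T mu) h) (fun _ => 0).
    case: (pselect (feq (dquot (act:=act)) (qcl d act x0) (fun h => -1 * mu h + Q (T mu) h) (fun _ => 0))) => // hn.
    have [f [[hf [hYf [hGf1 hGf2]]] hxf]] := hsep _ hxi hn.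
    exfalso; apply: hxf; rewrite /Q hT2 // /B BPsi //; first lra.
    by case: hf.
  move=> H f hf; have := H f hf => /= H'; lra.
have hTlin : forall (a : R) mu nu, free_space (dquot (act:=act)) (qcl d act x0) mu ->
    free_space (dquot (act:=act)) (qcl d act x0) nu ->
    feq d x0 (T (fun f => a * mu f + nu f)) (fun f => a * T mu f + T nu f).
  move=> a mu nu hmu hnu.
  have hc := free_comb a hdN hmu hnu.
  apply: (agreeY hd hY hpred); first exact: (hT _ hc).1.
    by apply: free_comb => //; [exact: (hT _ hmu).1|exact: (hT _ hnu).1].
  by move=> f hf; rewrite (hT _ hc).2 // (hT _ hmu).2 // (hT _ hnu).2.
have hTn : forall mu, free_space (dquot (act:=act)) (qcl d act x0) mu ->
    dualnorm d x0 (T mu) = dualnorm (dquot (act:=act)) (qcl d act x0) mu.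
  move=> mu hmu; have [hTf hT2] := hT mu hmu.
  apply/eqP; rewrite eq_le; apply/andP; split.
    rewrite -(hpred.1 _ hTf); apply: ge_sup.
      exists `|T mu (fun _ => 0)|, (fun _ => 0); split => //; split => //.
      by case: (lip0_zero x0 hd).
    move=> r [f [hf [hl ->]]]; rewrite hT2 //.
    have [hb hbl] := BL f (hYl f hf).
    apply: dual_bound => //; exact: le_trans hbl hl.
  rewrite -(dual_feq (hQT mu hmu)); exact: hQn.
exists T, (fun nu => T (Q nu)); split.
- by move=> mu hmu; case: (hT mu hmu).
- exact: hTlin.
- exact: hTn.
split.
- by move=> nu hnu; case: (hT _ (hQ _ hnu)).
- move=> a mu nu hmu hnu.
  exact: (hTlin a (Q mu) (Q nu) (hQ _ hmu) (hQ _ hnu)).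
- move=> nu hnu; rewrite hTn; [exact: hQn | exact: hQ].
- by move=> nu hnu; exists (Q nu); split; [exact: hQ|].
- by move=> mu hmu; rewrite (Tfeq _ _ (hQT mu hmu)).
Qed.
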